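(* Let $\mathcal{O}=(S,S_+,R,E,f,N)$ be an observation table, and let $(\overline{b_\omega})_{\omega\in S\cup S_+\cup R}$ and $(\overline{q_\omega})_{\omega\in S\cup S_+\cup R}$ be an assignment of the ending reset variables and location variables satisfying $C_1\wedge C_2\wedge C_3\wedge C_4$. Let $\mathcal{H}$ be the hypothesis automaton constructed from $\mathcal{O}$ and this assignment. Then: (i) $\mathcal{H}$ is a deterministic one-clock timed automaton; (ii) for every $\omega\in S\cup S_+\cup R$, $\mathcal{H}$ accepts $\omega$ if and only if $\textsf{MQ}(\omega)=+$; (iii) for any $\omega_1,\omega_2\in S\cup S_+\cup R$, if $f(\omega_1,\omega_2,i_1,i_2)=\bot$ where $i_1,i_2$ are the last resets of $\omega_1,\omega_2$ determined by the assignment $\overline{b}$ (i.e. $lr(\omega_1,i_1)$ and $lr(\omega_2,i_2)$ hold), then $\overline{q_{\omega_1}}\neq\overline{q_{\omega_2}}$ and $\omega_1,\omega_2$ reach distinct locations in $\mathcal{H}$.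
   Context: Setting: a finite alphabet $\Sigma$, a single clock, and a target timed language $L$ with membership function $\textsf{MQ}(\omega)=+$ if $\omega\in L$, $-$ otherwise. A one-clock timed automaton (OTA) is $(\Sigma,Q,q_0,F,c,\Delta)$ with transitions $(q,\sigma,\phi,b,q')\in Q\times\Sigma\times\Phi_c\times\{\top,\bot\}\times Q$, guards $\phi$ being intervals with endpoints in $\mathbb{N}\cup\{\infty\}$; a timed word $(\sigma_1,t_1)\cdots(\sigma_n,t_n)$ ($t_i\ge0$ delays) runs from clock value $0$ at $q_0$, taking at step $i$ a transition from the current location with action $\sigma_i$ whose guard contains (current clock value $+t_i$), after which the clock becomes $0$ if the transition's reset flag $b=\top$ and (current clock $+t_i$) otherwise; it is accepted if the run ends in $F$. Deterministic means guards of transitions with the same source and action are disjoint. Regions relative to a fixed $\kappa\in\mathbb{N}$: $[n,n]$ for $n\le\kappa$, $(n,n+1)$ for $n<\kappa$, $(\kappa,\infty)$; $\llbracket v\rrbracket$ is the region containing $v$. For a timed word $\omega$ of length $n$ and $0\le i\le n$, $\nu_c(\omega,i)=\sum_{j=i+1}^n t_j$. Test $T(\omega_1,\omega_2,i_1,i_2,e)$: if $e$ empty, $T=\top$ iff $\textsf{MQ}(\omega_1)=\textsf{MQ}(\omega_2)$; otherwise, with $e=(\sigma_1,t_1)\cdots(\sigma_m,t_m)$, $\nu_1=\nu_c(\omega_1,i_1)$, $\nu_2=\nu_c(\omega_2,i_2)$, form $e_1,e_2$ by adding $|\nu_1-\nu_2|$ to the first delay of $e$ for the word with the smaller $\nu$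 (and $e_1=e_2=e$ if equal), and $T=\top$ iff $\textsf{MQ}(\omega_1e_1)=\textsf{MQ}(\omega_2e_2)$. If $m$ is the length of the longest common prefix of $\omega_1,\omega_2$, the valid last-reset combinations are $\mathcal{C}(\omega_1,\omega_2)=\{(i_1,i_2):0\le i_1\le|\omega_1|,0\le i_2\le|\omega_2|,(i_1\le m\wedge i_2\le m)\Rightarrow i_1=i_2\}$. An observation table $\mathcal{O}=(S,S_+,R,E,f,N)$: $S,S_+,R$ disjoint finite sets of timed words with $S\cup S_+\cup R$ prefix-closed, $\epsilon\in S$, and $\omega\cdot(\sigma,0)\in S\cup S_+\cup R$ for all $\omega\in S\cup S_+$, $\sigma\in\Sigma$; $E$ a finite set of timed words with $\epsilon\in E$; $N\in\mathbb{N}$; and $f(\omega_1,\omega_2,i_1,i_2)=\top$ iff $T(\omega_1,\omega_2,i_1,i_2,e)=\top$ for all $e\in E$ (for $\omega_1,\omega_2\in S\cup S_+\cup R$, $(i_1,i_2)\in\mathcal{C}(\omega_1,\omega_2)$), else $\bot$. Variables: for each $\omega\in S\cup S_+\cup R$ a Boolean ending reset variable $b_\omega$ (whether the clock resets after the last action of $\omega$; $b_\epsilon=\top$) and an integer location variable $q_\omega$. With $\omega|_i$ the length-$i$ prefix, $lr(\omega,i)=b_{\omega|_i}\wedge\bigwedge_{i<j\le|\omega|}\neg b_{\omega|_j}$ and $LR(\omega_1,\omega_2,i,j)=lr(\omega_1,i)\wedge lr(\omega_2,j)$. Constraints: $C_1$ is the conjunction over all $\omega_1,\omega_2$, $(i,j)\in\mathcal{C}(\omega_1,\omega_2)$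 with $f(\omega_1,\omega_2,i,j)=\bot$ of $LR(\omega_1,\omega_2,i,j)\Rightarrow q_{\omega_1}\neq q_{\omega_2}$. $C_2$ is the conjunction, over all $\omega_1,\omega_2$ with $\omega_1'=\omega_1(\sigma,t_1)$, $\omega_2'=\omega_2(\sigma,t_2)$ in $S\cup S_+\cup R$ and $(i,j)\in\mathcal{C}(\omega_1,\omega_2)$ with $f(\omega_1,\omega_2,i,j)=\top$ and $\llbracket\nu_c(\omega_1,i)+t_1\rrbracket=\llbracket\nu_c(\omega_2,j)+t_2\rrbracket$, of $(q_{\omega_1}=q_{\omega_2}\wedge LR(\omega_1,\omega_2,i,j))\Rightarrow(b_{\omega_1'}=b_{\omega_2'}\wedge q_{\omega_1'}=q_{\omega_2'})$. $C_3=\bigwedge_{1\le k\le N}\bigvee_{\omega\in S\cup S_+}q_\omega=k\ \wedge\ \bigwedge_{\omega\in S\cup S_+\cup R}1\le q_\omega\le N$. $C_4=\bigwedge_{1\le k\le|S|}q_{\omega_k}=k$ for a fixed enumeration $\omega_1,\dots,\omega_{|S|}$ of $S$. Hypothesis construction from an assignment $\overline{b},\overline{q}$: $Q_{\mathcal{H}}=\{\overline{q_\omega}:\omega\in S\cup S_+\}$, initial location $\overline{q_\epsilon}$, accepting $F_{\mathcal{H}}=\{\overline{q_\omega}:\omega\in S\cup S_+,\textsf{MQ}(\omega)=+\}$. For each pair $\omega_1,\omega_2=\omega_1(\sigma,t)$ in $S\cup S_+\cup R$ form the auxiliary transition $(\overline{q_{\omega_1}},\sigma,\psi,\overline{b_{\omega_2}},\overline{q_{\omega_2}})$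 where $\psi=\nu(\omega_1)+t$ and $\nu(\omega_1)$ is the clock value after $\omega_1$ computed using the resets $\overline{b}$ of its prefixes. For each $q,\sigma$, sort the list of values $\psi$ of auxiliary transitions from $q$ with action $\sigma$ as $\mu_0<\dots<\mu_n$ and apply the partition function $P$; for each auxiliary transition with value $\mu_i$ add $(q,\sigma,g_i,b,q')$ to $\Delta_{\mathcal{H}}$. The partition function: with $\mu_0=0$ and $\mu_{n+1}=\infty$, $g_i=[\mu_i,\mu_{i+1})$ if $\mu_i,\mu_{i+1}\in\mathbb{N}$; $(\lfloor\mu_i\rfloor,\mu_{i+1})$ if $\mu_i\notin\mathbb{N},\mu_{i+1}\in\mathbb{N}$; $[\mu_i,\lfloor\mu_{i+1}\rfloor]$ if $\mu_i\in\mathbb{N},\mu_{i+1}\notin\mathbb{N}$; $(\lfloor\mu_i\rfloor,\lfloor\mu_{i+1}\rfloor]$ if both $\notin\mathbb{N}$ (with $\infty$ treated as an integer). *)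

(* Defs.v *)
From mathcomp Require Import all_boot all_order all_algebra.
Set Implicit Arguments. Unset Strict Implicit. Unset Printing Implicit Defensive.
Import Order.TTheory GRing.Theory Num.Theory.
Local Open Scope ring_scope.

Section OTADefs.
Variables (Sigma : finType) (R : archiRealFieldType).

(* timed words: sequences of (action, delay) *)
Definition tword := seq (Sigma * R).
Definition valid_tw (w : tword) : bool := all (fun p => 0 <= p.2) w.

Definition nu_c (w : tword) (i : nat) : R := \sum_(p <- drop i w) p.2.

Definition add_first (d : R) (e : tword) : tword :=
  match e with [::] => [::] | (s, t) :: e' => (s, t + d) :: e' end.

Definition test (MQ : tword -> bool) (w1 w2 : tword) (i1 i2 : nat) (e : tword)
  : bool :=
  if e is [::] then MQ w1 == MQ w2 else
  let n1 := nu_c w1 i1 in let n2 := nu_c w2 i2 in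
  let e1 := if n1 < n2 then add_first (n2 - n1) e else e in
  let e2 := if n2 < n1 then add_first (n1 - n2) e else e in
  MQ (w1 ++ e1) == MQ (w2 ++ e2).

Fixpoint lcp (w1 w2 : tword) : nat :=
  match w1, w2 with
  | x :: a, y :: c => if x == y then (lcp a c).+1 else 0%N
  | _, _ => 0%N
  end.

Definition valid_comb (w1 w2 : tword) (i1 i2 : nat) : bool :=
  [&& (i1 <= size w1)%N, (i2 <= size w2)%N &
      ((i1 <= lcp w1 w2)%N && (i2 <= lcp w1 w2)%N) ==> (i1 == i2)].

Definition fO (MQ : tword -> bool) (E : seq tword) (w1 w2 : tword) (i1 i2 : nat)
  : bool := all (test MQ w1 w2 i1 i2) E.

(* O = (S, S_+, R, E, f, N) is an observation table (f is determined by MQ, E) *)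
Definition obs_table (S Sp Rs E : seq tword) : Prop :=
  let tbl := S ++ Sp ++ Rs in
  [/\ uniq S, uniq Sp, uniq Rs & uniq E] /\
  [/\ (forall w, w \in S -> w \notin Sp), (forall w, w \in S -> w \notin Rs)
    & (forall w, w \in Sp -> w \notin Rs)] /\
  [/\ (forall w k, w \in tbl -> take k w \in tbl),
      [::] \in S,
      (forall w (s : Sigma), w \in S ++ Sp -> rcons w (s, 0) \in tbl),
      [::] \in E
    & (forall w, w \in tbl ++ E -> valid_tw w)].

(* regions relative to kappa: None = (kappa, oo);
   Some (n, true) = [n, n]; Some (n, false) = (n, n+1) *)
Definition region (kappa : nat) (v : R) : option (int * bool) :=
  if kappa%:R < v then None else Some (Num.floor v, v \is a Num.int).

Section Vars.
Variables (b : tword -> bool) (q : tword -> nat).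

Definition lr (w : tword) (i : nat) : bool :=
  b (take i w) && all (fun j => ~~ b (take j w)) (iota i.+1 (size w - i)).

Definition LR (w1 w2 : tword) (i j : nat) : bool := lr w1 i && lr w2 j.

Definition C1 (MQ : tword -> bool) (S Sp Rs E : seq tword) : Prop :=
  forall w1 w2, w1 \in S ++ Sp ++ Rs -> w2 \in S ++ Sp ++ Rs ->
  forall i j, valid_comb w1 w2 i j -> fO MQ E w1 w2 i j = false ->
  LR w1 w2 i j -> q w1 <> q w2.

Definition C2 (MQ : tword -> bool) (kappa : nat) (S Sp Rs E : seq tword)
  : Prop :=
  forall w1 w2 (s : Sigma) (t1 t2 : R),
  rcons w1 (s, t1) \in S ++ Sp ++ Rs -> rcons w2 (s, t2) \in S ++ Sp ++ Rs ->
  forall i j, valid_comb w1 w2 i j -> fO MQ E w1 w2 i j = true ->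
  region kappa (nu_c w1 i + t1) = region kappa (nu_c w2 j + t2) ->
  q w1 = q w2 -> LR w1 w2 i j ->
  b (rcons w1 (s, t1)) = b (rcons w2 (s, t2)) /\
  q (rcons w1 (s, t1)) = q (rcons w2 (s, t2)).

Definition C3 (N : nat) (S Sp Rs : seq tword) : Prop :=
  (forall k, (1 <= k <= N)%N -> exists2 w, w \in S ++ Sp & q w = k) /\
  (forall w, w \in S ++ Sp ++ Rs -> (1 <= q w <= N)%N).

(* the fixed enumeration of S is the order of the list S *)
Definition C4 (S : seq tword) : Prop :=
  forall k, (k < size S)%N -> q (nth [::] S k) = k.+1.

Definition clock (w : tword) : R :=
  (foldl (fun (acc : R * tword) p =>
            let w' := rcons acc.2 p in
            ((if b w' then 0 else acc.1 + p.2), w')) (0, [::]) w).1.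

End Vars.

(* guards: intervals (lo, lo_closed, hi, hi_closed) with endpoints in N u {oo};
   hi = None means oo *)
Definition guard := (nat * bool * option nat * bool)%type.

Definition in_guard (g : guard) (v : R) : bool :=
  let '(lo, lc, hi, hc) := g in
  (if lc then lo%:R <= v else lo%:R < v) &&
  (match hi with
   | None => true
   | Some h => if hc then v <= h%:R else v < h%:R
   end).

Definition transition := (nat * Sigma * guard * bool * nat)%type.
Definition tsrc (tr : transition) : nat := tr.1.1.1.1.
Definition tact (tr : transition) : Sigma := tr.1.1.1.2.
Definition tguard (tr : transition) : guard := tr.1.1.2.
Definition treset (tr : transition) : bool := tr.1.2.
Definition ttgt (tr : transition) : nat := tr.2.

Record ota := OTA {
  locs : seq nat; init : nat; accs : seq nat; trans : seq transition }.

Definition is_ota (H : ota) : Prop :=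
  [/\ init H \in locs H,
      (forall l, l \in accs H -> l \in locs H) &
      (forall tr, tr \in trans H -> tsrc tr \in locs H /\ ttgt tr \in locs H)].

Definition deterministic (H : ota) : Prop :=
  forall tr1 tr2, tr1 \in trans H -> tr2 \in trans H -> tr1 != tr2 ->
  tsrc tr1 = tsrc tr2 -> tact tr1 = tact tr2 ->
  forall v : R, ~~ (in_guard (tguard tr1) v && in_guard (tguard tr2) v).

Definition is_DOTA (H : ota) : Prop := is_ota H /\ deterministic H.

Fixpoint run (H : ota) (l : nat) (c : R) (w : tword) (l' : nat) : Prop :=
  match w with
  | [::] => l' = l
  | (s, t) :: w' =>
      exists2 tr, tr \in trans H &
        [/\ tsrc tr = l, tact tr = s, in_guard (tguard tr) (c + t) &
            run H (ttgt tr) (if treset tr then 0 else c + t) w' l']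
  end.

Definition accepts (H : ota) (w : tword) : Prop :=
  exists2 l, run H (init H) 0 w l & l \in accs H.

(* the partition function: guard g_i for the sorted values mus = mu_0 < ... < mu_n,
   with mu_0 replaced by 0 and mu_{n+1} = oo *)
Definition part (mus : seq R) (i : nat) : guard :=
  let a := if i == 0%N then 0 else nth 0 mus i in
  let hb := if (i.+1 < size mus)%N then Some (nth 0 mus i.+1) else None in
  (Num.truncn a, a \is a Num.nat, omap (@Num.truncn R) hb,
   match hb with Some x => x \isn't a Num.nat | None => false end).

Definition aux_of (b : tword -> bool) (q : tword -> nat) (w2 : tword)
  : option (nat * Sigma * R * bool * nat) :=
  match w2 with
  | [::] => None
  | x :: w' => let w1 := belast x w' in let p := last x w' in
      Some (q w1, p.1, clock b w1 + p.2, b w2, q w2)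
  end.

Definition hypothesis (MQ : tword -> bool) (S Sp Rs : seq tword)
  (b : tword -> bool) (q : tword -> nat) : ota :=
  let aux := pmap (aux_of b q) (S ++ Sp ++ Rs) in
  let mk (a : nat * Sigma * R * bool * nat) : transition :=
    let '(src, s, psi, rs, tgt) := a in
    let mus := sort <=%R (undup [seq a'.1.1.2 | a' <- aux &
                                   (a'.1.1.1.1 == src) && (a'.1.1.1.2 == s)]) in
    (src, s, part mus (index psi mus), rs, tgt) in
  OTA (undup [seq q w | w <- S ++ Sp]) (q [::])
      (undup [seq q w | w <- S ++ Sp & MQ w]) [seq mk a | a <- aux].

End OTADefs.

(* Main.v *)
Require Import Defs.
From mathcomp Require Import all_boot all_order all_algebra.
Import Order.TTheory GRing.Theory Num.Theory.
Local Open Scope ring_scope.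

Set Implicit Arguments. Unset Strict Implicit.

Definition cls (R : archiRealFieldType) (v : R) := (Num.truncn v, v \is a Num.nat).

Lemma tr_itv (R : archiRealFieldType) (x : R) : 0 <= x ->
  (Num.truncn x)%:R <= x /\ x < (Num.truncn x).+1%:R.
Proof. by move=> /truncn_itv /andP. Qed.

Lemma nat_tr (R : archiRealFieldType) (x : R) : x \is a Num.nat -> (Num.truncn x)%:R = x.
Proof. by rewrite natrEtruncn => /eqP. Qed.

Lemma notnat_lt (R : archiRealFieldType) (x : R) : 0 <= x -> x \isn't a Num.nat ->
  (Num.truncn x)%:R < x.
Proof.
move=> x0 nx; have [h _] := tr_itv x0; rewrite lt_neqAle h andbT.
by apply: contra nx => /eqP <-; apply: natr_nat.
Qed.

Lemma floor_tr (R : archiRealFieldType) (x : R) : 0 <= x -> Num.floor x = (Num.truncn x)%:Z.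
Proof.
move=> x0; rewrite truncn_floor x0 gez0_abs //.
by rewrite real_floor_ge0 ?ger0_real.
Qed.

Lemma region_cls (R : archiRealFieldType) kappa (v w : R) : 0 <= v -> 0 <= w ->
  cls v = cls w -> region kappa v = region kappa w.
Proof.
move=> v0 w0 [ht hn]; rewrite /region.
have key : forall x : R, 0 <= x -> x \isn't a Num.nat ->
   (kappa%:R < x) = (kappa <= Num.truncn x)%N.
  move=> x x0 nx; have [h1 h2] := tr_itv x0; have h3 := notnat_lt x0 nx.
  apply/idP/idP => H.
    by rewrite -ltnS -(ltr_nat R); apply: lt_trans h2.
  by apply: le_lt_trans h3; rewrite ler_nat.
have -> : (kappa%:R < v) = (kappa%:R < w).
  case nv: (v \is a Num.nat).
    by rewrite -(nat_tr nv) -(@nat_tr _ w) -?hn // ht.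
  by rewrite !key // ?ht // -?hn nv.
by rewrite !floor_tr // ht !intrEge0 // hn.
Qed.

Definition lowok (R : archiRealFieldType) (a v : R) :=
  if a \is a Num.nat then (Num.truncn a)%:R <= v else (Num.truncn a)%:R < v.
Definition upok (R : archiRealFieldType) (x v : R) :=
  if x \is a Num.nat then v < (Num.truncn x)%:R else v <= (Num.truncn x)%:R.

Lemma in_guard_part (R : archiRealFieldType) (mus : seq R) (k : nat) (v : R) :
  in_guard (part mus k) v =
  lowok (if k == 0%N then 0 else nth 0 mus k) v &&
  (if (k.+1 < size mus)%N then upok (nth 0 mus k.+1) v else true).
Proof.
rewrite /part /in_guard /lowok /upok.
case: (k.+1 < size mus)%N => /=; case: ifP => _ //. all: case: (_ \is a Num.nat) => //. 
Qed.

Lemma guard_cover (R : archiRealFieldType) (mus : seq R) (k : nat) (v : R) :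
  (k < size mus)%N -> 0 <= v -> all (fun x => 0 <= x) mus ->
  sorted <%R mus ->
  (k != 0%N -> cls v = cls (nth 0 mus k)) ->
  ((k.+1 < size mus)%N -> cls (nth 0 mus k) = cls v /\ cls (nth 0 mus k.+1) <> cls v) ->
  in_guard (part mus k) v.
Proof.
move=> ks v0 /allP pos srt hlo hup; rewrite in_guard_part; apply/andP; split.
  case: eqP => [_|/eqP k0]; first by rewrite /lowok nat_num0 truncn0.
  have [ht hn] := hlo k0; rewrite /lowok -ht -hn.
  case: ifP => nv; first by rewrite nat_tr.
  by apply: notnat_lt => //; rewrite nv.
case: ifP => // k1; move: (hup k1) => {hup}.
set m := nth 0 mus k; set x := nth 0 mus k.+1; move=> [[ht hn] hne].
have m0 : 0 <= m by apply: pos; rewrite mem_nth.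
have x0 : 0 <= x by apply: pos; rewrite mem_nth.
have mx : m < x.
  by have := (sorted_ltn_nth lt_trans 0 srt); apply => //; rewrite inE ?ltnW.
have [hv1 hv2] := tr_itv v0.
have [hm1 hm2] := tr_itv m0.
rewrite /upok; case: ifP => nx.
  apply: (lt_le_trans hv2); rewrite ler_nat -ht.
  by rewrite -(ltr_nat R) (nat_tr nx); apply: le_lt_trans mx.
have := le_truncn (ltW mx); rewrite leq_eqVlt => /orP [/eqP e|lt].
  have nm : m \is a Num.nat.
    apply/negPn/negP => nm; apply: hne; rewrite /cls -e ht nx -hn; move: nm; case: (m \is a Num.nat) => // _; rewrite hn.
  move: hn; rewrite nm => hn.
  by rewrite -e ht (@nat_tr _ v) // hn.
apply: ltW; apply: (lt_le_trans hv2); rewrite ler_nat -ht //.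
Qed.

Lemma guard_disj (R : archiRealFieldType) (mus : seq R) (k1 k2 : nat) (v : R) :
  (k1 < k2)%N -> (k2 < size mus)%N -> all (fun x => 0 <= x) mus ->
  sorted <%R mus ->
  ~~ (in_guard (part mus k1) v && in_guard (part mus k2) v).
Proof.
move=> k12 ks /allP pos srt; rewrite !in_guard_part.
have k1s : (k1.+1 < size mus)%N by apply: leq_ltn_trans ks.
rewrite k1s; have -> : (k2 == 0%N) = false by case: k2 k12 {ks}.
set x := nth 0 mus k1.+1; set y := nth 0 mus k2.
have x0 : 0 <= x by apply: pos; rewrite mem_nth.
have y0 : 0 <= y by apply: pos; rewrite mem_nth.
have xy : x <= y.
  move: k12; rewrite leq_eqVlt => /orP [/eqP e|lt]; first by rewrite /x /y e.
  by apply: ltW; have := (sorted_ltn_nth lt_trans 0 srt); apply => //; rewrite inE.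
apply/negP => /andP [/andP [_ up] /andP [lo _]]; move: up lo; rewrite /upok /lowok.
have [hx1 hx2] := tr_itv x0; have [hy1 hy2] := tr_itv y0.
have txy := le_truncn xy.
have tr : (Num.truncn x)%:R <= (Num.truncn y)%:R :> R by rewrite ler_nat.
case: ifP => nx; case: ifP => ny => h1 h2.
- by have := lt_le_trans h1 (le_trans tr h2); rewrite ltxx.
- by have := lt_trans h1 (le_lt_trans tr h2); rewrite ltxx.
- have xy' : x < y.
    rewrite lt_neqAle xy andbT; apply/negP => /eqP e.
    by move: nx; rewrite e ny.
  have : (Num.truncn x)%:R < y by apply: le_lt_trans hx1 xy'.
  rewrite -{1}(nat_tr ny) => h.
  by have := le_lt_trans h1 (lt_le_trans h h2); rewrite ltxx.
- by have := le_lt_trans h1 (le_lt_trans tr h2); rewrite ltxx.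
Qed.

Lemma clock_rcons (Sigma : finType) (R : archiRealFieldType) (b : tword Sigma R -> bool)
  (w : tword Sigma R) (p : Sigma * R) :
  clock b (rcons w p) = if b (rcons w p) then 0 else clock b w + p.2.
Proof.
have snd : forall (w : tword Sigma R) c u,
  (foldl (fun (acc : R * tword Sigma R) p =>
            let w' := rcons acc.2 p in
            ((if b w' then 0 else acc.1 + p.2), w')) (c, u) w).2 = u ++ w.
  elim=> [|x w' IH] c u /=; first by rewrite cats0.
  by rewrite IH cat_rcons.
by rewrite /clock foldl_rcons /= snd.
Qed.

Lemma clock_nil (Sigma : finType) (R : archiRealFieldType) (b : tword Sigma R -> bool) :
  clock b [::] = 0.
Proof. by []. Qed.

Lemma lr_exists (Sigma : finType) (R : archiRealFieldType) (b : tword Sigma R -> bool)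
  (w : tword Sigma R) : b [::] ->
  exists i, [/\ (i <= size w)%N, lr b w i & clock b w = nu_c w i].
Proof.
move=> b0; elim/last_ind: w => [|w x [i [iw lri ci]]].
  by exists 0%N; rewrite /lr /nu_c /= b0 big_nil.
case hb: (b (rcons w x)).
  exists (size (rcons w x)); split => //.
    by rewrite /lr take_size hb subnn.
  by rewrite clock_rcons hb /nu_c drop_size big_nil.
exists i; split.
- by rewrite size_rcons (leq_trans iw).
- move: lri; rewrite /lr -cats1 takel_cat // => /andP [-> al] /=.
  rewrite size_cat /= -addnBAC // iotaD all_cat; apply/andP; split.
    apply/allP => j jin; have := allP al j jin; rewrite takel_cat //.
    by move: jin; rewrite mem_iota addSn ltnS subnKC // => /andP [].
  by rewrite /= andbT addSn subnKC // cats1 -(size_rcons w x) take_size hb.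
- rewrite clock_rcons hb ci /nu_c drop_rcons // big_rcons //.
Qed.

Lemma aux_rcons (Sigma : finType) (R : archiRealFieldType) (b : tword Sigma R -> bool)
  (q : tword Sigma R -> nat) (w : tword Sigma R) (p : Sigma * R) :
  aux_of b q (rcons w p) = Some (q w, p.1, clock b w + p.2, b (rcons w p), q (rcons w p)).
Proof. by case: w => [|y w] //=; rewrite belast_rcons last_rcons. Qed.

Lemma aux_inv (Sigma : finType) (R : archiRealFieldType) (b : tword Sigma R -> bool)
  (q : tword Sigma R -> nat) (w : tword Sigma R) a :
  aux_of b q w = Some a -> exists w1 p, w = rcons w1 p.
Proof.
case/lastP: w => [|w p] //= _; by exists w, p.
Qed.

Definition musf (Sigma : finType) (R : archiRealFieldType)
  (aux : seq (nat * Sigma * R * bool * nat)) (src : nat) (s : Sigma) : seq R :=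
  sort <=%R (undup [seq a'.1.1.2 | a' <- aux &
                                   (a'.1.1.1.1 == src) && (a'.1.1.1.2 == s)]).

Lemma trans_eq (Sigma : finType) (R : archiRealFieldType) (MQ : tword Sigma R -> bool)
  (S Sp Rs : seq (tword Sigma R)) (b : tword Sigma R -> bool) (q : tword Sigma R -> nat) :
  let aux := pmap (aux_of b q) (S ++ Sp ++ Rs) in
  trans (hypothesis MQ S Sp Rs b q) =
  [seq (a.1.1.1.1, a.1.1.1.2,
        part (musf aux a.1.1.1.1 a.1.1.1.2) (index a.1.1.2 (musf aux a.1.1.1.1 a.1.1.1.2)),
        a.1.2, a.2) | a <- aux].
Proof.
move=> aux /=; apply: eq_map; by case=> [[[[? ?] ?] ?] ?].
Qed.
Unset Implicit Arguments. Set Strict Implicit.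
Theorem theorem1 (Sigma : finType) (R : archiRealFieldType)
  (MQ : tword Sigma R -> bool) (kappa : nat)
  (S Sp Rs E : seq (tword Sigma R)) (N : nat)
  (b : tword Sigma R -> bool) (q : tword Sigma R -> nat) :
  obs_table S Sp Rs E ->
  b [::] = true ->
  C1 b q MQ S Sp Rs E ->
  C2 b q MQ kappa S Sp Rs E ->
  C3 q N S Sp Rs ->
  C4 q S ->
  let H := hypothesis MQ S Sp Rs b q in
  [/\ is_DOTA R H,
      (forall w, w \in S ++ Sp ++ Rs -> (accepts (R:=R) H w <-> MQ w = true)) &
      (forall w1 w2, w1 \in S ++ Sp ++ Rs -> w2 \in S ++ Sp ++ Rs ->
       forall i1 i2, (i1 <= size w1)%N -> (i2 <= size w2)%N ->
       lr b w1 i1 -> lr b w2 i2 -> fO MQ E w1 w2 i1 i2 = false ->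
       [/\ q w1 <> q w2,
           exists l1 l2, run (R:=R) H (init H) 0 w1 l1 /\ run (R:=R) H (init H) 0 w2 l2 &
           forall l1 l2, run (R:=R) H (init H) 0 w1 l1 -> run (R:=R) H (init H) 0 w2 l2 ->
             l1 <> l2])].
Proof.
move=> Hobs b0 HC1 HC2 [HC3a HC3b] _ H.
case: Hobs => -[uS uSp uRs uE] [[dSSp dSRs dSpRs] [pref nilS ext nilE valid]].
set tbl := S ++ Sp ++ Rs.
have pref1 : forall w p, rcons w p \in tbl -> w \in tbl.
  move=> w p /(pref _ (size w)); by rewrite -cats1 takel_cat // take_size.
have lr_after : forall w i j, lr b w i -> (i < j)%N -> (j <= size w)%N -> ~~ b (take j w).
  move=> w i j /andP [_ /allP al] ij js; apply: al; rewrite mem_iota ij /=.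
  by rewrite addSn ltnS subnKC // (leq_trans (ltnW ij)).
have take_lcp : forall (w1 w2 : tword Sigma R) k, (k <= lcp w1 w2)%N -> take k w1 = take k w2.
  elim=> [|x w1 IH] [|y w2] [|k] //=; case: eqP => // -> /IH -> //.
have lcp_size : forall (w1 w2 : tword Sigma R), (lcp w1 w2 <= size w1)%N /\ (lcp w1 w2 <= size w2)%N.
  elim=> [|x w1 IH] [|y w2] //=; case: eqP => // _; exact: IH.
have valid_lr : forall w1 w2 i j, (i <= size w1)%N -> (j <= size w2)%N ->
    lr b w1 i -> lr b w2 j -> valid_comb w1 w2 i j.
  move=> w1 w2 i j iw jw l1 l2; rewrite /valid_comb iw jw /=.
  apply/implyP => /andP [il jl]; have [s1 s2] := lcp_size w1 w2.
  case: (ltngtP i j) => // ij.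
    have := lr_after _ _ _ l1 ij (leq_trans jl s1); rewrite (take_lcp w1 w2) //.
    by move: l2 => /andP [-> _].
  have := lr_after _ _ _ l2 ij (leq_trans il s2); rewrite -(take_lcp w1 w2) //.
  by move: l1 => /andP [-> _].
have feq : forall w1 w2, w1 \in tbl -> w2 \in tbl -> forall i j,
    (i <= size w1)%N -> (j <= size w2)%N -> lr b w1 i -> lr b w2 j ->
    q w1 = q w2 -> fO MQ E w1 w2 i j = true.
  move=> w1 w2 h1 h2 i j iw jw l1 l2 e; apply/negP => /negP /negbTE hf.
  by apply: (HC1 w1 w2 h1 h2 i j (valid_lr _ _ _ _ iw jw l1 l2) hf) => //; rewrite /LR l1 l2.
have mq : forall w1 w2, w1 \in tbl -> w2 \in tbl -> q w1 = q w2 -> MQ w1 = MQ w2.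
  move=> w1 w2 h1 h2 e.
  have [i [iw l1 _]] := lr_exists w1 b0; have [j [jw l2 _]] := lr_exists w2 b0.
  have := feq _ _ h1 h2 _ _ iw jw l1 l2 e => /allP /(_ _ nilE) /=.
  by move/eqP.
have clock0 : forall w, w \in tbl -> 0 <= clock b w.
  move=> w hw; have [i [iw _ ->]] := lr_exists w b0.
  rewrite /nu_c big_seq; apply: sumr_ge0 => p /mem_drop pw.
  have := valid w; rewrite mem_cat hw => /(_ isT) /allP; by apply.
have t0 : forall w p, rcons w p \in tbl -> 0 <= p.2.
  move=> w p hw; have := valid (rcons w p); rewrite mem_cat hw => /(_ isT) /allP; apply.
  by rewrite mem_rcons inE eqxx.
set aux := pmap (aux_of b q) tbl.
have aux_in : forall w p, rcons w p \in tbl ->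
    (q w, p.1, clock b w + p.2, b (rcons w p), q (rcons w p)) \in aux.
  by move=> w p hw; rewrite mem_pmap -aux_rcons; apply: map_f.
have aux_out : forall a, a \in aux -> exists w p, rcons w p \in tbl /\
    a = (q w, p.1, clock b w + p.2, b (rcons w p), q (rcons w p)).
  move=> a; rewrite mem_pmap => /mapP [w hw e].
  have [w1 [p ew]] := aux_inv (esym e); rewrite ew in hw e.
  by exists w1, p; split => //; move: e; rewrite aux_rcons => -[->].
have mus_sorted : forall src s, sorted <%R (musf aux src s).
  move=> src s; rewrite lt_sorted_uniq_le sort_uniq undup_uniq /=.
  exact: sort_le_sorted.
have mus_mem : forall src s x, x \in musf aux src s -> exists w t,
    [/\ rcons w (s, t) \in tbl, q w = src & clock b w + t = x].
  move=> src s x; rewrite /musf mem_sort mem_undup => /mapP [a].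
  rewrite mem_filter => /andP [/andP [/eqP e1 /eqP e2] /aux_out [w [[s' t] [hw ea]]]] ->.
  subst a; move: e1 e2 => /= e1 e2; subst s'.
  by exists w, t.
have mus_in : forall w s t, rcons w (s, t) \in tbl -> clock b w + t \in musf aux (q w) s.
  move=> w s t hw; rewrite /musf mem_sort mem_undup; apply/mapP.
  exists (q w, s, clock b w + t, b (rcons w (s, t)), q (rcons w (s, t))); last by [].
  by rewrite mem_filter /= !eqxx /=; exact: (aux_in w (s, t) hw).
have mus_pos : forall src s, all (fun x => 0 <= x) (musf aux src s).
  move=> src s; apply/allP => x /mus_mem [w [t [hw _ <-]]].
  by apply: addr_ge0; [apply: clock0; apply: pref1 hw | apply: (t0 _ _ hw)].
have c2 : forall w1 w2 s t1 t2, rcons w1 (s, t1) \in tbl -> rcons w2 (s, t2) \in tbl ->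
    q w1 = q w2 -> cls (clock b w1 + t1) = cls (clock b w2 + t2) ->
    b (rcons w1 (s, t1)) = b (rcons w2 (s, t2)) /\ q (rcons w1 (s, t1)) = q (rcons w2 (s, t2)).
  move=> w1 w2 s t1 t2 h1 h2 e hc.
  have [i [iw l1 ci]] := lr_exists w1 b0; have [j [jw l2 cj]] := lr_exists w2 b0.
  apply: (HC2 _ _ _ _ _ h1 h2 i j (valid_lr _ _ _ _ iw jw l1 l2)) => //.
  - exact: feq (pref1 _ _ h1) (pref1 _ _ h2) _ _ iw jw l1 l2 e.
  - rewrite -ci -cj; apply: region_cls => //; apply: addr_ge0.
    + by apply: clock0; apply: pref1 h1.
    + exact: (t0 _ _ h1).
    + by apply: clock0; apply: pref1 h2.
    + exact: (t0 _ _ h2).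
  - by rewrite /LR l1 l2.
have trE := trans_eq MQ S Sp Rs b q.
have tr_in : forall w p, rcons w p \in tbl ->
    (q w, p.1, part (musf aux (q w) p.1) (index (clock b w + p.2) (musf aux (q w) p.1)),
     b (rcons w p), q (rcons w p)) \in trans H.
  move=> w p hw; rewrite /H trE; apply/mapP.
  by exists (q w, p.1, clock b w + p.2, b (rcons w p), q (rcons w p)); [apply: aux_in|].
have tr_out : forall tr, tr \in trans H -> exists w p, rcons w p \in tbl /\ tr =
    (q w, p.1, part (musf aux (q w) p.1) (index (clock b w + p.2) (musf aux (q w) p.1)),
     b (rcons w p), q (rcons w p)).
  move=> tr; rewrite /H trE => /mapP [a /aux_out [w [p [hw ->]]] ->].
  by exists w, p.
have KT : forall w s t, rcons w (s, t) \in tbl -> exists2 tr, tr \in trans H &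
    [/\ tsrc tr = q w, tact tr = s, in_guard (tguard tr) (clock b w + t),
        treset tr = b (rcons w (s, t)) & ttgt tr = q (rcons w (s, t))].
  move=> w s t hw.
  set mus := musf aux (q w) s; set psi := clock b w + t.
  have psi_in : psi \in mus by apply: mus_in.
  have psi0 : 0 <= psi by move: (allP (mus_pos (q w) s) _ psi_in).
  pose P k := (k < size mus)%N && (cls (nth 0 mus k) == cls psi).
  have exP : exists k, P k.
    by exists (index psi mus); rewrite /P index_mem psi_in nth_index // eqxx.
  have ubP : forall k, P k -> (k <= size mus)%N by move=> k /andP [/ltnW].
  case: (ex_maxnP exP ubP) => k /andP [ks /eqP hk] kmax.
  have [w' [t' [hw' qw' ew']]] := mus_mem _ _ _ (mem_nth 0 ks).
  have [eb eq'] : b (rcons w (s, t)) = b (rcons w' (s, t')) /\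
                  q (rcons w (s, t)) = q (rcons w' (s, t')).
    by apply: c2 => //; rewrite ew' hk.
  exists (q w', s, part (musf aux (q w') s) (index (clock b w' + t') (musf aux (q w') s)),
     b (rcons w' (s, t')), q (rcons w' (s, t'))).
    exact: (tr_in w' (s, t') hw').
  rewrite /tsrc /tact /tguard /treset /ttgt /= qw' eb eq'; split => //.
  rewrite ew' -/mus index_uniq //; last first.
    by have := mus_sorted (q w) s; rewrite lt_sorted_uniq_le => /andP [].
  apply: (guard_cover ks psi0 (mus_pos _ _) (mus_sorted _ _)).
  - by move=> _; rewrite hk.
  - move=> k1; split => // e; have := kmax k.+1; rewrite /P k1 e eqxx => /(_ isT).
    by rewrite ltnn.
have det : deterministic R H.
  move=> tr1 tr2 /tr_out [w1 [[s1 t1] [h1 ->]]] /tr_out [w2 [[s2 t2] [h2 ->]]] ne.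
  rewrite /tsrc /tact /= => e1 e2 v; subst s2.
  change (~~ (in_guard (part (musf aux (q w1) s1) (index (clock b w1 + t1) (musf aux (q w1) s1))) v &&
              in_guard (part (musf aux (q w2) s1) (index (clock b w2 + t2) (musf aux (q w2) s1))) v)).
  rewrite -e1; set mus := musf aux (q w1) s1.
  have i1 : clock b w1 + t1 \in mus by apply: mus_in.
  have i2 : clock b w2 + t2 \in mus by rewrite /mus e1; apply: mus_in.
  case: (eqVneq (clock b w1 + t1) (clock b w2 + t2)) => ep.
    have [eb eq'] := c2 _ _ _ _ _ h1 h2 e1 (congr1 (@cls R) ep).
    by move: ne; rewrite /= e1 ep eb eq' eqxx.
  have ui : uniq mus by have := mus_sorted (q w1) s1; rewrite lt_sorted_uniq_le => /andP [].
  have ni : index (clock b w1 + t1) mus != index (clock b w2 + t2) mus.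
    by apply: contra ep => /eqP e; rewrite -(nth_index 0 i1) e nth_index.
  have k1s := i1; rewrite -index_mem in k1s.
  have k2s := i2; rewrite -index_mem in k2s.
  case: (ltngtP (index (clock b w1 + t1) mus) (index (clock b w2 + t2) mus)) ni => // lt _.
    exact: (guard_disj v lt k2s (mus_pos _ _) (mus_sorted _ _)).
  by rewrite andbC; exact: (guard_disj v lt k1s (mus_pos _ _) (mus_sorted _ _)).
have run_det : forall (w : tword Sigma R) l (c : R) l1 l2, run H l c w l1 -> run H l c w l2 -> l1 = l2.
  elim=> [|[s t] w IH] l c l1 l2 /=; first by move=> -> ->.
  move=> [tr1 h1 [s1 a1 g1 r1]] [tr2 h2 [s2 a2 g2 r2]].
  case: (eqVneq tr1 tr2) => [e|ne]; first by subst tr2; apply: IH r1 r2.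
  by have := det _ _ h1 h2 ne (etrans s1 (esym s2)) (etrans a1 (esym a2)) (c + t); rewrite g1 g2.
have run_ex : forall v u : tword Sigma R, u ++ v \in tbl -> run H (q u) (clock b u) v (q (u ++ v)).
  elim=> [|[s t] v IH] u hu /=; first by rewrite cats0.
  have hx : rcons u (s, t) \in tbl.
    by have := pref _ (size u).+1 hu; rewrite -cat_rcons takel_cat ?size_rcons // -(size_rcons u (s, t)) take_size.
  have [tr htr [a1 a2 a3 a4 a5]] := KT u s t hx.
  exists tr => //; split => //; rewrite a5 a4 -cat_rcons.
  have := IH (rcons u (s, t)); rewrite clock_rcons /=; apply.
  by rewrite cat_rcons.
have run0 : forall w, w \in tbl -> run H (init H) 0 w (q w).
  by move=> w hw; exact: (run_ex w [::] hw).
have loc : forall w, w \in tbl -> q w \in locs H.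
  move=> w hw; have [w' hw' e] := HC3a _ (HC3b w hw).
  by rewrite /H /= mem_undup -e; apply: map_f.
have tblS : forall w, w \in S ++ Sp -> w \in tbl.
  by move=> w hw; rewrite /tbl catA mem_cat hw.
split.
- split => //; split.
  + by rewrite /H /= mem_undup; apply: map_f; rewrite mem_cat nilS.
  + rewrite /H /= => l; rewrite !mem_undup => /mapP [w]; rewrite mem_filter => /andP [_ hw] ->.
    exact: map_f.
  + move=> tr /tr_out [w [p [hw ->]]]; split; rewrite /tsrc /ttgt /=; apply: loc => //.
    exact: pref1 hw.
- move=> w hw; split.
    move=> [l hl]; rewrite (run_det _ _ _ _ _ hl (run0 w hw)).
    rewrite /H /= mem_undup => /mapP [w']; rewrite mem_filter => /andP [m hw'] e.
    by rewrite (mq w w' hw (tblS _ hw') e).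
  move=> m; exists (q w); first exact: run0.
  have [w' hw' e] := HC3a _ (HC3b w hw).
  rewrite /H /= mem_undup -e; apply: map_f; rewrite mem_filter hw' andbT.
  by rewrite (mq w' w (tblS _ hw') hw e).
- move=> w1 w2 h1 h2 i1 i2 iw1 iw2 l1 l2 hf.
  have ne : q w1 <> q w2.
    by apply: (HC1 w1 w2 h1 h2 i1 i2 (valid_lr _ _ _ _ iw1 iw2 l1 l2) hf); rewrite /LR l1 l2.
  split => //.
    by exists (q w1), (q w2); split; apply: run0.
  move=> m1 m2 r1 r2.
  by rewrite (run_det _ _ _ _ _ r1 (run0 w1 h1)) (run_det _ _ _ _ _ r2 (run0 w2 h2)).
Qed.
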